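(* Let $\Theta$ be a standard bunch in $(E\xrightarrow{Q}K,\gamma)$. Then $\mathcal O(X_\Theta)=\mathbb K$ (only constant global regular functions) if and only if $Q$ maps no ray of $\gamma$ to $\{0\}$ and the image $Q(\gamma)$ is strictly convex.
   Context: Work over an algebraically closed field $\mathbb K$ of characteristic zero. Lattices are finitely generated free abelian groups; cones are convex polyhedral; $\tau^\circ$ relative interior, $\preceq$ face relation, $\mathrm{lin}$ linear span. A projected cone $(E\xrightarrow{Q}K,\gamma)$ is a surjective lattice map with a simplicial full-dimensional cone $\gamma\subset E_{\mathbb Q}$; its dual is $(F\xrightarrow{P}N,\delta)$ with $F=\mathrm{Hom}(E,\mathbb Z)$, $N=\mathrm{Hom}(\ker Q,\mathbb Z)$, $P$ restriction, $\delta=\gamma^\vee$; $\gamma_0^*:=\gamma_0^\perp\cap\delta$. A bunch is a nonempty set $\Theta$ of projected faces $Q(\gamma_0)$, $\gamma_0\preceq\gamma$, such that a projected face $\tau_0$ lies in $\Theta$ iff $\emptyset\ne\tau_0^\circ\cap\tau^\circ\ne\tau^\circ$ for all $\tau\in\Theta\setminus\{\tau_0\}$; $\mathrm{cov}(\Theta)$ is the set of faces $\gamma_0\preceq\gamma$ minimal with $Q(\gamma_0)\supseteq\tau$ for some $\tau\in\Theta$. $\Theta$ is standard if for every facet $\gamma_i$ of $\gamma$: $K=Q(\mathrm{lin}(\gamma_i)\cap E)$ and some $\tau\in\Theta$ has $\tau^\circ\subset Q(\gamma_i)^\circ$. For standard $\Theta$, the cones $P(\sigma)$, $\sigma\preceq\gamma_0^*$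 with $\gamma_0\in\mathrm{cov}(\Theta)$, form a fan $\Delta(\Theta)$ in $N$, and $X_\Theta$ is its toric variety. *)

(* Defs.v *)
From HB Require Import structures.
From mathcomp Require Import all_boot all_order all_algebra.
Set Implicit Arguments. Unset Strict Implicit. Unset Printing Implicit Defensive.
Import Order.TTheory GRing.Theory Num.Theory.
Local Open Scope ring_scope.

Definition qcone (n : nat) := 'rV[rat]_n -> Prop.

Definition subcone n (A B : qcone n) : Prop := forall x, A x -> B x.

Definition dotq n (u x : 'rV[rat]_n) : rat := (u *m x^T) 0 0.

Definition qmx m n (A : 'M[int]_(m, n)) : 'M[rat]_(m, n) :=
  map_mx (fun z : int => z%:~R) A.

Definition cone_gen m n (G : 'M[rat]_(m, n)) : qcone n :=
  fun x => exists a : 'rV[rat]_m, (forall i, 0 <= a 0 i) /\ x = a *m G.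

Definition is_face n (F C : qcone n) : Prop :=
  exists u : 'rV[rat]_n, (forall x, C x -> 0 <= dotq u x) /\
    F = (fun x => C x /\ dotq u x = 0).

Definition lin n (C : qcone n) : qcone n :=
  fun x => exists (m : nat) (c : 'I_m -> rat) (v : 'I_m -> 'rV[rat]_n),
    (forall i, C (v i)) /\ x = \sum_(i < m) c i *: v i.

Definition has_dim n (C : qcone n) (d : nat) : Prop :=
  exists B : 'M[rat]_(d, n), row_free B /\ forall x, lin C x <-> (x <= B)%MS.

Definition is_facet n (F C : qcone n) : Prop :=
  is_face F C /\ exists d, has_dim C d.+1 /\ has_dim F d.

Definition is_ray n (F C : qcone n) : Prop := is_face F C /\ has_dim F 1.

(* relative interior (Rockafellar, Thm 6.4 characterization of ri for convex sets) *)
Definition relint n (C : qcone n) : qcone n :=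
  fun x => C x /\ forall y, C y -> exists e : rat, 0 < e /\ C ((1 + e) *: x - e *: y).

Definition image_cone r k (Q : 'M[int]_(r, k)) (C : qcone r) : qcone k :=
  fun y => exists x, C x /\ y = x *m qmx Q.

Definition strictly_convex n (C : qcone n) : Prop :=
  forall y, C y -> C (- y) -> y = 0.

Section Bunch.
Variables (r k : nat) (Q : 'M[int]_(r, k)) (gamma : qcone r).

Definition is_projface (tau : qcone k) : Prop :=
  exists g0, is_face g0 gamma /\ tau = image_cone Q g0.

Definition is_bunch (Theta : qcone k -> Prop) : Prop :=
  (exists tau, Theta tau) /\
  (forall tau, Theta tau -> is_projface tau) /\
  (forall tau0, is_projface tau0 ->
     (Theta tau0 <->
      forall tau, Theta tau -> tau <> tau0 ->
        (fun x => relint tau0 x /\ relint tau x) <> (fun _ => False) /\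
        (fun x => relint tau0 x /\ relint tau x) <> relint tau)).

Definition covers (Theta : qcone k -> Prop) (g0 : qcone r) : Prop :=
  exists tau, Theta tau /\ subcone tau (image_cone Q g0).

Definition cov (Theta : qcone k -> Prop) (g0 : qcone r) : Prop :=
  is_face g0 gamma /\ covers Theta g0 /\
  forall g1, is_face g1 gamma -> is_face g1 g0 -> covers Theta g1 -> g1 = g0.

Definition is_standard (Theta : qcone k -> Prop) : Prop :=
  forall gi, is_facet gi gamma ->
    (forall y : 'rV[int]_k, exists x : 'rV[int]_r, lin gi (qmx x) /\ x *m Q = y) /\
    (exists tau, Theta tau /\ subcone (relint tau) (relint (image_cone Q gi))).

(* dual side: F = Hom(E,Z) identified with Z^r via dotq; delta = gamma^vee *)
Definition dual_cone : qcone r := fun u => forall x, gamma x -> 0 <= dotq u x.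

Definition face_star (g0 : qcone r) : qcone r :=
  fun u => dual_cone u /\ forall x, g0 x -> dotq u x = 0.

(* sigma (a cone in F_Q) such that P(sigma) is a cone of the fan Delta(Theta) *)
Definition fan_cone (Theta : qcone k -> Prop) (sigma : qcone r) : Prop :=
  exists g0, cov Theta g0 /\ is_face sigma (face_star g0).

(* The character lattice of the torus of X_Theta is M = Hom(N,Z) = ker Q in E.
   m in M lies in P(sigma)^vee iff <P(f), m> = <f, m> >= 0 for all f in sigma. *)
Definition in_dual_image (sigma : qcone r) (m : 'rV[int]_r) : Prop :=
  forall f, sigma f -> 0 <= dotq f (qmx m).

Variable kk : fieldType.

(* elements of the group algebra kk[M], M = ker Q: finitely supported
   functions on E with support in ker Q *)
Definition group_alg_elt (f : 'rV[int]_r -> kk) : Prop :=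
  (exists s : seq 'rV[int]_r, forall m, f m != 0 -> m \in s) /\
  (forall m, f m != 0 -> m *m Q = 0).

(* O(X_Theta) = intersection over the cones P(sigma) of the fan of the
   coordinate rings kk[P(sigma)^vee cap M] of the affine charts, inside kk[M] *)
Definition global_functions (Theta : qcone k -> Prop) : (('rV[int]_r -> kk) -> Prop) :=
  fun f => group_alg_elt f /\
    forall sigma, fan_cone Theta sigma -> forall m, f m != 0 -> in_dual_image sigma m.

Definition constant_functions : (('rV[int]_r -> kk) -> Prop) :=
  fun f => forall m, f m != 0 -> m = 0.

End Bunch.

(* Main.v *)
Require Import Defs.
From HB Require Import structures.
From mathcomp Require Import all_boot all_order all_algebra.
From mathcomp Require Import lra.
From Stdlib Require Import Classical FunctionalExtensionality PropExtensionality.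
Set Implicit Arguments. Unset Strict Implicit. Unset Printing Implicit Defensive.
Import Order.TTheory GRing.Theory Num.Theory.
Local Open Scope ring_scope.

Definition rcone m n (V : 'M[rat]_(m,n)) (I : {set 'I_m}) : qcone n :=
  fun y => exists a : 'rV_m, (forall i, 0 <= a 0 i) /\
    (forall i, i \notin I -> a 0 i = 0) /\ y = a *m V.

Lemma pigeon_seq (T : eqType) (P : T -> nat -> Prop) (s : seq T) :
  (forall N, exists t, (N <= t)%N /\ exists2 l, l \in s & P l t) ->
  exists2 l, l \in s & forall N, exists t, (N <= t)%N /\ P l t.
Proof.
elim: s => [|x s IH] H.
  by have [t [_ [l]]] := H 0%N; rewrite in_nil.
case: (classic (forall N, exists t, (N <= t)%N /\ P x t)) => [Hx|Hx].
  by exists x; rewrite ?mem_head.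
have [N0 HN0]: exists N0, forall t, (N0 <= t)%N -> ~ P x t.
  have [N0 HN0] := not_all_ex_not _ _ Hx.
  exists N0 => t Ht Pt; apply: HN0; by exists t.
have [l ls Hl] : exists2 l, l \in s & forall N, exists t, (N <= t)%N /\ P l t.
  apply: IH => N.
  have [t [Ht [l]]] := H (maxn N N0).
  rewrite in_cons => /orP [/eqP ->|ls] Pl.
    by exfalso; apply: (HN0 t) => //; apply: leq_trans Ht; rewrite leq_maxr.
  exists t; split; last by exists l.
  by apply: leq_trans Ht; rewrite leq_maxl.
by exists l => //; rewrite in_cons ls orbT.
Qed.

Lemma pigeon (T : finType) (P : T -> nat -> Prop) :
  (forall N, exists t, (N <= t)%N /\ exists l, P l t) ->
  exists l, forall N, exists t, (N <= t)%N /\ P l t.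
Proof.
move=> H.
have [l _ Hl] := @pigeon_seq T P (enum T) (fun N => match H N with
  ex_intro t (conj Ht (ex_intro l Pl)) => ex_intro _ t (conj Ht (ex_intro2 _ _ l (mem_enum T l) Pl)) end).
by exists l.
Qed.

Lemma rcone_reduce m n (V : 'M[rat]_(m,n)) (I : {set 'I_m}) (d c : 'rV_m) l0 :
  (forall i, i \notin I -> d 0 i = 0) -> d *m V = 0 -> 0 < d 0 l0 ->
  (forall i, 0 <= c 0 i) -> (forall i, i \notin I -> c 0 i = 0) ->
  exists2 l, l \in I & rcone V (I :\ l) (c *m V).
Proof.
move=> dI dV dl0 c0 cI.
case: (@arg_minP _ _ _ l0 (fun i => 0 < d 0 i) (fun i => c 0 i / d 0 i) dl0).
move=> l dl lmin.
set lam := c 0 l / d 0 l.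
have lam0 : 0 <= lam by rewrite divr_ge0 // ltW.
exists l.
  apply: contraTT dl => /dI ->; by rewrite ltxx.
exists (c - lam *: d); split; [|split].
- move=> i; rewrite !mxE subr_ge0.
  case: (ltrP 0 (d 0 i)) => di.
    by rewrite -ler_pdivlMr //; apply: lmin.
  by apply: (le_trans _ (c0 i)); rewrite mulr_ge0_le0.
- move=> i; rewrite in_setD1 negb_and negbK => /orP [/eqP ->|iI].
    by rewrite !mxE /lam divfK ?subrr // gt_eqF.
  by rewrite !mxE cI // dI // mulr0 subrr.
- by rewrite mulmxBl -scalemxAl dV scaler0 subr0.
Qed.

Lemma rcone_sub m n (V : 'M[rat]_(m,n)) (I J : {set 'I_m}) y :
  I \subset J -> rcone V I y -> rcone V J y.
Proof.
move=> IJ [a [a0 [aI ->]]]; exists a; split=> //; split=> // i iJ.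
by apply: aI; apply: contra iJ; apply: (subsetP IJ).
Qed.

Lemma rcone_closed m n (V : 'M[rat]_(m,n)) (I : {set 'I_m}) (v w : 'rV_n) :
  (forall N, exists t, (N <= t)%N /\ rcone V I (v + t%:R *: w)) -> rcone V I w.
Proof.
move=> H; have [N0 leI] := ubnP #|I|; elim: N0 I leI v w H => // N0 IH I leI v w H.
case: (classic (exists d : 'rV_m, d != 0 /\ (forall i, i \notin I -> d 0 i = 0) /\ d *m V = 0)) => [[d [dn0 [dI dV]]]|Hind].
- have [d' [d'I [d'V [l0 dl0]]]] : exists d' : 'rV_m, (forall i, i \notin I -> d' 0 i = 0) /\ d' *m V = 0 /\ exists l0, 0 < d' 0 l0.
    have [l0 dl0] : exists l0, d 0 l0 != 0.
      apply: NNPP => Hn; move/negP: dn0; apply; apply/eqP/rowP => i; rewrite mxE.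
      by apply: NNPP => Hi; apply: Hn; exists i; apply/eqP.
    case: (ltrP 0 (d 0 l0)) => h.
      by exists d; split=> //; split=> //; exists l0.
    exists (- d); split; [move=> i /dI; rewrite mxE => ->; by rewrite oppr0|split].
      by rewrite mulNmx dV oppr0.
    by exists l0; rewrite mxE oppr_gt0 lt_neqAle dl0 h.
  have Hp : forall N, exists t, (N <= t)%N /\ exists l, l \in I /\ rcone V (I :\ l) (v + t%:R *: w).
    move=> N; have [t [Nt [c [c0 [cI e]]]]] := H N.
    have [l lI Hl] := rcone_reduce d'I d'V dl0 c0 cI.
    by exists t; split=> //; exists l; rewrite e.
  have [l Hl] := pigeon Hp.
  have lI : l \in I by have [t [_ []]] := Hl 0%N.
  have : rcone V (I :\ l) w.
    apply: (IH (I :\ l) _ v) => [|N]; last by have [t [Nt [_ ?]]] := Hl N; exists t.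
    by move: leI; rewrite (cardsD1 l I) lI.
  by apply: rcone_sub; apply: subsetDl.
- have inj : forall d : 'rV_m, (forall i, i \notin I -> d 0 i = 0) -> d *m V = 0 -> d = 0.
    move=> d dI dV; apply: NNPP => dn0; apply: Hind; exists d; split; [apply/eqP|]; done.
  have [t1 [_ [c1 [c1g [c1I e1]]]]] := H 0%N.
  have [t2 [lt12 [c2 [c2g [c2I e2]]]]] := H t1.+1.
  have t21 : (t2%:R - t1%:R : rat) != 0 by rewrite subr_eq0 eqr_nat gtn_eqF.
  set b := (t2%:R - t1%:R)^-1 *: (c2 - c1).
  have bI : forall i, i \notin I -> b 0 i = 0.
    by move=> i iI; rewrite !mxE c1I ?c2I // subrr mulr0.
  have wb : w = b *m V.
    rewrite -scalemxAl mulmxBl -e1 -e2.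
    have -> : v + t2%:R *: w - (v + t1%:R *: w) = (t2%:R - t1%:R) *: w.
      by rewrite opprD addrACA subrr add0r scalerBl.
    by rewrite scalerA mulVf // scale1r.
  set a := c1 - t1%:R *: b.
  have aI : forall i, i \notin I -> a 0 i = 0.
    by move=> i iI; rewrite !mxE c1I ?c2I // subrr !mulr0 subrr.
  have va : v = a *m V by rewrite mulmxBl -scalemxAl -wb -e1 addrK.
  clearbody a; clearbody b.
  exists b; split; [|split=> //].
  move=> i; apply: NNPP => /negP; rewrite -ltNge => bi.
  set N := Num.Def.archi_bound (`|a 0 i| / - b 0 i).
  have [t [Nt [c [c0 [cI e]]]]] := H N.
  have ce : c = a + t%:R *: b.
    apply/eqP; rewrite -subr_eq0; apply/eqP; apply: inj.
      by move=> j jI; rewrite !mxE cI // aI // bI // mulr0 !subrr.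
    by rewrite mulmxBl -e mulmxDl -scalemxAl -va -wb subrr.
  have := c0 i; rewrite ce !mxE.
  have : `|a 0 i| / - b 0 i < t%:R.
    apply: (lt_le_trans (archi_boundP _)); last by rewrite ler_nat.
    by rewrite divr_ge0 // oppr_ge0 ltW.
  rewrite ltr_pdivrMr ?oppr_gt0 // => h1 h2.
  have h3 := ler_norm (a 0 i).
  have : t%:R * b 0 i < - `|a 0 i| by rewrite mulrN ltrNr in h1.
  move=> h4.
  move: (t%:R * b 0 i) (a 0 i) (`|a 0 i|) h2 h3 h4 => x y z; lra.
Qed.

Lemma dotq_mul m n (u : 'rV[rat]_n) (a : 'rV[rat]_m) (V : 'M[rat]_(m,n)) :
  dotq u (a *m V) = dotq (u *m V^T) a.
Proof. by rewrite /dotq trmx_mul mulmxA. Qed.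

Lemma dotqE n (u x : 'rV[rat]_n) : dotq u x = \sum_i u 0 i * x 0 i.
Proof. rewrite /dotq mxE; apply: eq_bigr => i _; by rewrite mxE. Qed.

Lemma dotqC n (u x : 'rV[rat]_n) : dotq u x = dotq x u.
Proof. by rewrite !dotqE; apply: eq_bigr => i _; rewrite mulrC. Qed.

Lemma dotq_deltar n (u : 'rV[rat]_n) (j : 'I_n) : dotq u (delta_mx 0 j : 'rV_n) = u 0 j.
Proof. by rewrite /dotq trmx_delta -colE mxE. Qed.

Lemma colj0 n (u : 'rV[rat]_n) (j : 'I_n) : (u *m (delta_mx j 0 : 'cV_n) == 0) = (u 0 j == 0).
Proof.
rewrite -colE; apply/eqP/eqP.
  by move/matrixP/(_ 0 0); rewrite !mxE.
by move=> h; apply/matrixP => p q; rewrite !mxE !ord1.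
Qed.

Lemma delta_ge0 n (j i : 'I_n) : 0 <= (delta_mx 0 j : 'rV[rat]_n) 0 i.
Proof. by rewrite mxE ler0n. Qed.

Lemma delta_rcone m n (V : 'M[rat]_(m,n)) (I : {set 'I_m}) i :
  i \in I -> rcone V I (delta_mx 0 i *m V).
Proof.
move=> iI; exists (delta_mx 0 i); split; first exact: delta_ge0.
split=> // l lI; rewrite mxE eqxx /=; case: (eqVneq l i) => [li|]; last by [].
by move: lI; rewrite li iI.
Qed.

Lemma rcone0 m n (V : 'M[rat]_(m,n)) (I : {set 'I_m}) : rcone V I 0.
Proof. by exists 0; split; [move=> i; rewrite mxE|split; [move=> i; rewrite mxE|rewrite mul0mx]]. Qed.

Lemma lin_comb n m (C : qcone n) (V : 'M[rat]_(m,n)) (a : 'rV_m) :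
  C 0 -> (forall i, a 0 i != 0 -> C (row i V)) -> lin C (a *m V).
Proof.
move=> C0 HC.
exists m, (fun i => a 0 i), (fun i => if a 0 i != 0 then row i V else 0); split.
  by move=> i; case: ifP => h; [exact: HC h|].
rewrite mulmx_sum_row; apply: eq_bigr => i _; case: ifP => //.
by move/negbFE/eqP => ->; rewrite !scale0r.
Qed.

Lemma lin_sub n m (C : qcone n) (S : 'M[rat]_(m,n)) :
  (forall x, C x -> (x <= S)%MS) -> forall x, lin C x -> (x <= S)%MS.
Proof.
move=> H x [p [c [v [Cv ->]]]]; apply: summx_sub => i _; apply: scalemx_sub; exact: H.
Qed.

Lemma has_dim_rank n m (C : qcone n) (S : 'M[rat]_(m,n)) :
  (forall x, lin C x <-> (x <= S)%MS) -> has_dim C (\rank S).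
Proof.
move=> H; exists (row_base S); split; first exact: row_base_free.
by move=> x; rewrite eq_row_base; exact: H.
Qed.

Lemma relint_rcone m n (V : 'M[rat]_(m,n)) (I : {set 'I_m}) (a : 'rV_m) :
  (forall i, i \in I -> 1 <= a 0 i) -> (forall i, i \notin I -> a 0 i = 0) ->
  relint (rcone V I) (a *m V).
Proof.
move=> H1 H2; split.
  exists a; split => // i; case: (boolP (i \in I)) => [/H1 h| /H2 ->] //.
  exact: le_trans ler01 h.
move=> y [b [b0 [bI ->]]].
set s := \sum_i b 0 i.
have s0 : 0 <= s by apply: sumr_ge0.
have bs : forall i, b 0 i <= s.
  by move=> i; rewrite /s (bigD1 i) //= lerDl sumr_ge0.
have s1 : 0 < 1 + s by apply: (lt_le_trans ltr01); rewrite lerDl.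
set e := (1 + s)^-1.
have e0 : 0 < e by rewrite invr_gt0.
have eb : forall i, e * b 0 i <= 1.
  move=> i; rewrite mulrC ler_pdivrMr // mul1r.
  by apply: le_trans (bs i) _; rewrite lerDr.
exists e; split=> //.
exists ((1+e) *: a - e *: b); split; [|split].
- move=> i; rewrite !mxE; case: (boolP (i \in I)) => iI.
    have h1 := H1 i iI; have h2 := eb i.
    have h3 : 0 <= e * a 0 i by apply: mulr_ge0; [exact: ltW|exact: le_trans ler01 h1].
    rewrite mulrDl mul1r.
    move: (e * a 0 i) (e * b 0 i) (a 0 i) h1 h2 h3 => p1 p2 p3; lra.
  by rewrite H2 // bI // !mulr0 subrr.
- by move=> i iI; rewrite !mxE H2 // bI // !mulr0 subrr.
- by rewrite mulmxBl -!scalemxAl.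
Qed.

Section Gamma.
Variables (r k : nat) (Q : 'M[int]_(r, k)) (G : 'M[rat]_r) (hG : G \in unitmx).

Local Notation gam := (cone_gen G).

Lemma delta_gam i : gam (delta_mx 0 i *m G).
Proof. by exists (delta_mx 0 i); split=> // j; exact: delta_ge0. Qed.

Lemma face_ge0 (u : 'rV_r) : (forall i, 0 <= (u *m G^T) 0 i) ->
  forall x, gam x -> 0 <= dotq u x.
Proof.
move=> w0 x [a [a0 ->]]; rewrite dotq_mul dotqE sumr_ge0 // => i _.
exact: mulr_ge0.
Qed.

Lemma face_eq (u : 'rV_r) : (forall i, 0 <= (u *m G^T) 0 i) ->
  (fun x => gam x /\ dotq u x = 0) = rcone G [set i | (u *m G^T) 0 i == 0].
Proof.
move=> w0; apply: functional_extensionality => x; apply: propositional_extensionality; split.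
  move=> [[a [a0 ->]] du]; exists a; split=> //; split=> // i; rewrite inE => wi.
  move: du; rewrite dotq_mul dotqE => /psumr_eq0P h.
  have /eqP := h (fun i _ => mulr_ge0 (w0 i) (a0 i)) i isT.
  by rewrite mulf_eq0 (negbTE wi) => /eqP.
move=> [a [a0 [aI ->]]]; split; first by exists a.
rewrite dotq_mul dotqE big1 // => i _.
case: (boolP (i \in [set i | (u *m G^T) 0 i == 0])) => [|/aI ->]; last by rewrite mulr0.
by rewrite inE => /eqP ->; rewrite mul0r.
Qed.

Lemma face_char g : is_face g gam -> exists I, g = rcone G I.
Proof.
move=> [u [u0 ->]]; exists [set i | (u *m G^T) 0 i == 0]; apply: face_eq.
by move=> i; have := u0 _ (delta_gam i); rewrite dotq_mul dotq_deltar.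
Qed.

Lemma rcone_face I : is_face (rcone G I) gam.
Proof.
set chi : 'rV[rat]_r := \row_i (if i \in I then 0 else 1).
exists (chi *m (invmx G)^T).
have wE : chi *m (invmx G)^T *m G^T = chi.
  by rewrite -mulmxA -trmx_mul mulmxV // trmx1 mulmx1.
have w0 : forall i, 0 <= (chi *m (invmx G)^T *m G^T) 0 i.
  by move=> i; rewrite wE mxE; case: ifP.
split; first exact: face_ge0.
rewrite face_eq //; congr rcone; apply/setP => i; rewrite inE wE mxE.
by case: ifP => _; rewrite ?eqxx ?oner_eq0.
Qed.

Lemma rcone_incl I1 I : (forall x, rcone G I1 x -> rcone G I x) -> I1 \subset I.
Proof.
move=> H; apply/subsetP => i iI1.
have [a [_ [aI e]]] := H _ (delta_rcone G iI1).
have ea : delta_mx 0 i = a by move/(congr1 (mulmx^~ (invmx G))): e; rewrite /= !mulmxK.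
apply: contraT => niI; have := aI i niI; rewrite -ea mxE !eqxx /= => /eqP.
by rewrite oner_eq0.
Qed.

Lemma image_rcone I : image_cone Q (rcone G I) = rcone (G *m qmx Q) I.
Proof.
apply: functional_extensionality => y; apply: propositional_extensionality; split.
  by move=> [x [[a [a0 [aI ->]]] ->]]; exists a; rewrite mulmxA.
move=> [a [a0 [aI ->]]]; exists (a *m G); split; last by rewrite mulmxA.
by exists a.
Qed.

Lemma dim_gam : has_dim gam r.
Proof.
suff H : has_dim gam (\rank (1%:M : 'M[rat]_r)) by rewrite mxrank1 in H.
apply: has_dim_rank => x; split => [_|_]; first exact: submx1.
rewrite -(mulmxKV hG x); apply: lin_comb; first by exists 0; split=> [i|]; rewrite ?mxE ?mul0mx.
by move=> i _; rewrite rowE; exact: delta_gam.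
Qed.

Lemma deltaG_neq0 (j : 'I_r) : (delta_mx 0 j : 'rV_r) *m G != 0.
Proof.
apply/eqP => /(congr1 (mulmx^~ (invmx G))) /=; rewrite mulmxK // mul0mx.
by move/matrixP/(_ 0 j); rewrite !mxE !eqxx.
Qed.

Lemma dim_facet j : has_dim (rcone G [set~ j]) r.-1.
Proof.
set c := invmx G *m (delta_mx j 0 : 'cV_r).
have cE : forall x : 'rV_r, (x *m c == 0) = ((x *m invmx G) 0 j == 0).
  by move=> x; rewrite /c mulmxA colj0.
have cn0 : c^T != 0.
  rewrite trmx_eq0; apply/eqP => c0.
  have := congr1 (mulmx G) c0; rewrite /c mulKVmx // mulmx0.
  by move/matrixP/(_ j 0); rewrite !mxE !eqxx.
have -> : r.-1 = \rank (kermx c).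
  by rewrite mxrank_ker -mxrank_tr rank_rV cn0 subn1.
apply: has_dim_rank => x; split.
  apply: lin_sub => {}x [a [a0 [aI ->]]]; apply/sub_kermxP/eqP.
  by rewrite cE mulmxK // aI // !inE eqxx.
move/sub_kermxP/eqP; rewrite cE => /eqP h.
rewrite -(mulmxKV hG x); apply: lin_comb; first exact: rcone0.
move=> i hi; rewrite rowE; apply: delta_rcone; rewrite !inE.
by apply: contra hi => /eqP ->; rewrite h.
Qed.

Lemma dim_ray j : has_dim (rcone G [set j]) 1.
Proof.
have -> : 1%N = \rank (row j G) by rewrite rank_rV rowE deltaG_neq0.
apply: has_dim_rank => x; split.
  apply: lin_sub => {}x [a [a0 [aI ->]]].
  have -> : a = a 0 j *: delta_mx 0 j.
    apply/rowP => i; rewrite !mxE; case: (eqVneq i j) => [->|ij].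
      by rewrite eqxx mulr1.
    by rewrite aI ?mulr0 // !inE.
  by rewrite -scalemxAl -rowE scalemx_sub.
move/sub_rVP => [c ->]; rewrite rowE scalemxAl; apply: lin_comb; first exact: rcone0.
move=> i; rewrite !mxE; case: (eqVneq i j) => [->|]; last by rewrite andbF mulr0 eqxx.
by move=> _; rewrite rowE; apply: delta_rcone; rewrite inE.
Qed.

Lemma ray_j j : is_ray (rcone G [set j]) gam.
Proof. split; [exact: rcone_face|exact: dim_ray]. Qed.

Lemma facet_j j : is_facet (rcone G [set~ j]) gam.
Proof.
split; first exact: rcone_face.
exists r.-1; split; last exact: dim_facet.
by rewrite prednK; [exact: dim_gam|exact: (leq_ltn_trans (leq0n _) (ltn_ord j))].
Qed.

End Gamma.

Lemma face_sub n (F C : qcone n) : is_face F C -> forall x, F x -> C x.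
Proof. by move=> [u [_ ->]] x []. Qed.

Lemma min_card (T : finType) (P : {set T} -> Prop) A :
  P A -> exists B, P B /\ forall C, P C -> (#|B| <= #|C|)%N.
Proof.
have [n] := ubnP #|A|; elim: n A => // n IH A lt PA.
case: (classic (exists C, P C /\ (#|C| < #|A|)%N)) => [[C [PC lt']]|H].
  by apply: (IH C) => //; apply: leq_trans lt' _; rewrite -ltnS.
exists A; split=> // C PC; rewrite leqNgt; apply/negP => h; apply: H; by exists C.
Qed.

Lemma rcone_add m n (V : 'M[rat]_(m,n)) (J : {set 'I_m}) x y :
  rcone V J x -> rcone V J y -> rcone V J (x + y).
Proof.
move=> [a [a0 [aI ->]]] [b [b0 [bI ->]]]; exists (a + b); split; [|split].
- by move=> i; rewrite mxE addr_ge0.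
- by move=> i iJ; rewrite mxE aI // bI // addr0.
- by rewrite mulmxDl.
Qed.

Lemma rcone_scale m n (V : 'M[rat]_(m,n)) (J : {set 'I_m}) x c :
  0 <= c -> rcone V J x -> rcone V J (c *: x).
Proof.
move=> c0 [a [a0 [aI ->]]]; exists (c *: a); split; [|split].
- by move=> i; rewrite mxE mulr_ge0.
- by move=> i iJ; rewrite mxE aI // mulr0.
- by rewrite scalemxAl.
Qed.

Lemma rcone_gens m n (V : 'M[rat]_(m,n)) (I J : {set 'I_m}) :
  (forall i, i \in I -> rcone V J (row i V)) -> subcone (rcone V I) (rcone V J).
Proof.
move=> H y [b [b0 [bI ->]]]; rewrite mulmx_sum_row.
apply: (big_ind (rcone V J)); [exact: rcone0|exact: rcone_add|].
move=> i _; case: (boolP (i \in I)) => iI.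
  by apply: rcone_scale => //; exact: H.
by rewrite bI // scale0r; exact: rcone0.
Qed.

Lemma qmx0 m n : qmx (0 : 'M[int]_(m,n)) = 0.
Proof. by apply/matrixP => i j; rewrite !mxE. Qed.

Lemma qmx_eq0 m n (A : 'M[int]_(m,n)) : qmx A = 0 -> A = 0.
Proof.
move/matrixP => h; apply/matrixP => i j; have := h i j; rewrite !mxE => /eqP.
by rewrite intr_eq0 => /eqP.
Qed.

Lemma qmxM m n p (A : 'M[int]_(m,n)) (B : 'M[int]_(n,p)) : qmx (A *m B) = qmx A *m qmx B.
Proof. rewrite /qmx. exact: map_mxM. Qed.

Lemma dotq0 n (u : 'rV[rat]_n) : dotq u 0 = 0.
Proof. by rewrite /dotq trmx0 mulmx0 mxE. Qed.

Lemma dotq0l n (u : 'rV[rat]_n) : dotq 0 u = 0.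
Proof. by rewrite /dotq mul0mx mxE. Qed.

Lemma clear_den n (x : 'rV[rat]_n) :
  exists2 c : rat, 0 < c & exists m : 'rV[int]_n, qmx m = c *: x.
Proof.
exists ((\prod_i denq (x 0 i))%:~R).
  by rewrite ltr0z; apply: prodr_gt0 => i _; exact: denq_gt0.
exists (\row_i (numq (x 0 i) * \prod_(l | l != i) denq (x 0 l))).
apply/rowP => i; rewrite !mxE intrM numqE [X in _ = X%:~R * _](bigD1 i) //= intrM.
by rewrite [RHS]mulrC mulrA.
Qed.

Section Main.
Variables (r k : nat) (Q : 'M[int]_(r, k)) (G : 'M[rat]_r) (hG : G \in unitmx)
  (Theta : qcone k -> Prop).

Lemma gam_pointed x : cone_gen G x -> cone_gen G (- x) -> x = 0.
Proof.
move=> [c1 [c10 e1]] [c2 [c20 e2]].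
have : (c1 + c2) *m G = 0 by rewrite mulmxDl -e1 -e2 addrN.
move/(congr1 (mulmx^~ (invmx G))); rewrite /= mulmxK // mul0mx => s0.
have c1_0 : c1 = 0.
  apply/rowP => i; move/rowP/(_ i): (s0); rewrite !mxE => h.
  have := c10 i; have := c20 i; move: h; move: (c1 0 i) (c2 0 i) => p q; lra.
by rewrite e1 c1_0 mul0mx.
Qed.

Lemma rcone_single (V : 'M[rat]_(r,k)) j z :
  rcone V [set j] z -> exists c, z = c *: (delta_mx 0 j *m V).
Proof.
move=> [c [c0 [cI ->]]].
have E : c = c 0 j *: delta_mx 0 j.
  apply/rowP => i; rewrite !mxE; case: (eqVneq i j) => [->|ij].
    by rewrite eqxx mulr1.
  by rewrite cI ?mulr0 // !inE.
by exists (c 0 j); rewrite {1}E -scalemxAl.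
Qed.

Hypotheses (Hb : is_bunch Q (cone_gen G) Theta) (Hs : is_standard Q (cone_gen G) Theta).

Lemma cover_j (j : 'I_r) : exists I : {set 'I_r}, j \notin I /\ cov Q (cone_gen G) Theta (rcone G I).
Proof.
have [_ [tau [Ttau Hrel]]] := Hs (facet_j hG j).
have [g1 [fg1 tauE]] := Hb.2.1 tau Ttau.
have [I1 g1E] := face_char fg1.
rewrite g1E image_rcone in tauE.
rewrite image_rcone in Hrel.
have covF : covers Q Theta (rcone G [set~ j]).
  exists tau; split=> //; rewrite image_rcone tauE.
  apply: rcone_gens => i iI1.
  set v := (\row_l (if l \in I1 then 1 else 0) : 'rV[rat]_r) *m (G *m qmx Q).
  apply: (@rcone_closed _ _ _ _ v) => N; exists N; split=> //.
  have h : relint tau (v + N%:R *: row i (G *m qmx Q)).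
    rewrite tauE rowE scalemxAl /v -mulmxDl; apply: relint_rcone => l.
      move=> lI; rewrite !mxE lI lerDl.
      by rewrite mulr_ge0 ?ler0n.
    move=> lI; rewrite !mxE (negbTE lI) add0r.
    case: (eqVneq l i) => [li|]; first by rewrite li iI1 in lI.
    by rewrite andbF mulr0.
  by case: (Hrel _ h).
have jn : j \notin [set~ j] by rewrite !inE eqxx.
have [I [[jI covI] Imin]] := @min_card _ (fun I => j \notin I /\ covers Q Theta (rcone G I)) [set~ j] (conj jn covF).
exists I; split=> //; split; first exact: rcone_face.
split=> // g1' fg1' fg1'I covg1'.
have [I1' g1'E] := face_char fg1'.
rewrite g1'E in fg1'I covg1' *.
have sub : I1' \subset I := rcone_incl hG (face_sub fg1'I).
have le := Imin I1' (conj (contra (subsetP sub j) jI) covg1').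
by have /eqP -> : I1' == I by rewrite eqEcard sub le.
Qed.

End Main.

Lemma key_nz (kk : fieldType) r k (Q : 'M[int]_(r, k)) (G : 'M[rat]_r) (Theta : qcone k -> Prop)
  (Heq : global_functions Q (cone_gen G) (kk:=kk) Theta = @constant_functions r kk) :
  forall x, cone_gen G x -> x *m qmx Q = 0 -> x = 0.
Proof.
move=> x gx xQ; have [c c0 [m mE]] := clear_den x.
have mQ : m *m Q = 0 by apply: qmx_eq0; rewrite qmxM mE -scalemxAl xQ scaler0.
pose f : 'rV[int]_r -> kk := fun m' => if m' == m then 1 else 0.
have gf : global_functions Q (cone_gen G) Theta f.
  split; [split|].
  - by exists [:: m] => m'; rewrite /f; case: (eqVneq m' m) => [->|_]; [rewrite mem_head|rewrite eqxx].
  - by move=> m'; rewrite /f; case: (eqVneq m' m) => [-> _ //|_]; rewrite eqxx.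
  - move=> sigma [g0 [_ fs]] m'; rewrite /f; case: (eqVneq m' m) => [-> _|_]; last by rewrite eqxx.
    move=> fv /(face_sub fs) [dc _]; apply: dc; rewrite mE.
    case: gx => a [a0 ->]; exists (c *: a); split; last by rewrite scalemxAl.
    by move=> i; rewrite mxE mulr_ge0 // ltW.
rewrite Heq in gf.
have m0 : m = 0 by apply: gf; rewrite /f eqxx oner_neq0.
move: mE; rewrite m0 qmx0 => /esym /eqP; rewrite scaler_eq0 gt_eqF //= => /eqP. done.
Qed.

Unset Implicit Arguments.
Set Strict Implicit.

Theorem proposition7p4
  (kk : closedFieldType) (char0 : [pchar kk] =i pred0)
  (r k : nat) (Q : 'M[int]_(r, k))
  (Qsurj : forall y : 'rV[int]_k, exists x : 'rV[int]_r, x *m Q = y)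
  (G : 'M[rat]_r) (Gsimpl : G \in unitmx)
  (Theta : qcone k -> Prop)
  (Hbunch : is_bunch Q (cone_gen G) Theta)
  (Hstd : is_standard Q (cone_gen G) Theta) :
  global_functions Q (cone_gen G) (kk:=kk) Theta = @constant_functions r kk
  <->
  ((forall rho, is_ray rho (cone_gen G) ->
      image_cone Q rho <> (fun y => y = 0)) /\
   strictly_convex (image_cone Q (cone_gen G))).
Proof.
split.
- move=> Heq; have key := key_nz Heq; split.
  + move=> rho [frho [B [Bfree HB]]] Himg.
    have [v rv vn0] : exists2 v, rho v & v != 0.
      apply: NNPP => H.
      have : lin rho B by apply/HB; exact: submx_refl.
      move=> [p [c [w [rw Be]]]].
      have B0 : B = 0.
        rewrite Be big1 // => i _.
        have -> : w i = 0 by apply: NNPP => wn; apply: H; exists (w i) => //; apply/eqP.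
        by rewrite scaler0.
      by move: Bfree; rewrite /row_free B0 mxrank0.
    have : image_cone Q rho (v *m qmx Q) by exists v.
    rewrite Himg => vQ.
    by move/eqP: vn0; apply; apply: key => //; exact: (face_sub frho).
  + move=> y [a1 [g1 e1]] [a2 [g2 e2]].
    have s0 : a1 + a2 = 0.
      apply: key; last by rewrite mulmxDl -e1 -e2 addrN.
      case: g1 => c1 [c10 ->]; case: g2 => c2 [c20 ->].
      exists (c1 + c2); split; last by rewrite mulmxDl.
      by move=> i; rewrite mxE addr_ge0.
    have a1E : a1 = - a2 by apply/eqP; rewrite -addr_eq0 s0.
    have a2_0 : a2 = 0 by apply: (gam_pointed Gsimpl) => //; rewrite -a1E.
    by rewrite e1 a1E a2_0 oppr0 mul0mx.
- move=> [Hray Hsc]. apply: functional_extensionality => f; apply: propositional_extensionality; split.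
  + move=> [[_ hQ] hfan] m fm.
    have mQ := hQ m fm.
    set a := qmx m *m invmx G.
    have mE : qmx m = a *m G by rewrite /a mulmxKV.
    clearbody a.
    have hE : forall j : 'I_r, (delta_mx 0 j : 'rV_r) *m (invmx G)^T *m G^T = delta_mx 0 j.
      by move=> j; rewrite -mulmxA -trmx_mul mulmxV // trmx1 mulmx1.
    have a0 : forall j, 0 <= a 0 j.
      move=> j; have [I [jI covI]] := cover_j Gsimpl Hbunch Hstd j.
      have fs : fan_cone Q (cone_gen G) Theta (face_star (cone_gen G) (rcone G I)).
        exists (rcone G I); split => //. exists 0; split; first by move=> x _; rewrite dotq0l.
        apply: functional_extensionality => x; apply: propositional_extensionality.
        by rewrite dotq0l; split; [move=> h; split|case].
      have := hfan _ fs m fm (delta_mx 0 j *m (invmx G)^T).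
      rewrite mE dotq_mul hE dotqC dotq_deltar; apply; split.
        by move=> x [b [b0 ->]]; rewrite dotq_mul hE dotqC dotq_deltar; exact: b0.
      by move=> x [b [_ [bI ->]]]; rewrite dotq_mul hE dotqC dotq_deltar; exact: bI.
    have aQ : a *m (G *m qmx Q) = 0 by rewrite mulmxA -mE -qmxM mQ qmx0.
    have a_0 : a = 0.
      apply/rowP => j; rewrite mxE; apply/eqP; apply: contraT => ajn0.
      have aj : 0 < a 0 j by rewrite lt_neqAle eq_sym ajn0 a0.
      set y := (delta_mx 0 j : 'rV_r) *m (G *m qmx Q).
      have y0 : y = 0.
        apply: Hsc.
          by exists (delta_mx 0 j *m G); split; [exact: delta_gam|rewrite /y mulmxA].
        exists (((a 0 j)^-1 *: a - delta_mx 0 j) *m G); split.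
          exists ((a 0 j)^-1 *: a - delta_mx 0 j); split => // i; rewrite !mxE.
          case: (eqVneq i j) => [->|ij]; first by rewrite !eqxx mulVf ?subrr // gt_eqF.
          by rewrite andbF subr0 mulr_ge0 // invr_ge0 ltW.
        by rewrite -mulmxA mulmxBl -scalemxAl aQ scaler0 sub0r.
      exfalso; apply: (Hray _ (ray_j Gsimpl j)).
      rewrite image_rcone; apply: functional_extensionality => z; apply: propositional_extensionality.
      split; last by move=> ->; exact: rcone0.
      by move/rcone_single => [c ->]; rewrite -/y y0 scaler0.
    by apply: qmx_eq0; rewrite mE a_0 mul0mx.
  + move=> fc; split; [split|].
    - by exists [:: 0] => m /fc ->; exact: mem_head.
    - by move=> m /fc ->; rewrite mul0mx.
    - by move=> sigma _ m /fc -> f' _; rewrite qmx0 dotq0.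
Qed.
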